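(* In the D-RR setting under the nonconvex assumptions, suppose $\alpha_t=\alpha$ for all $t$ with $0<\alpha\le\frac{1}{mL}$. Then for every epoch $t$ (and every realization of the permutations), $$f(\bar x_{t+1}^0)\le f(\bar x_t^0)-\frac{\alpha m}{2}\|\nabla f(\bar x_t^0)\|^2+\frac{L^2\alpha}{n}\sum_{\ell=0}^{m-1}\|\mathbf x_t^\ell-\mathbf 1(\bar x_t^\ell)^\intercal\|^2+\alpha L^2\sum_{\ell=0}^{m-1}\|\bar x_t^\ell-\bar x_t^0\|^2 .$$
   Context: D-RR setting. Let $n,m,p\ge1$ be integers and $[k]=\{1,\dots,k\}$. For $i\in[n]$, $\ell\in[m]$ let $f_{i,\ell}:\mathbb{R}^p\to\mathbb{R}$ be differentiable; $f_i:=\frac1m\sum_{\ell=1}^m f_{i,\ell}$, $f:=\frac1n\sum_{i=1}^n f_i$. Let $W=(w_{ij})\in\mathbb{R}^{n\times n}$ be nonnegative, symmetric, with $W\mathbf 1=\mathbf 1$, compliant with an undirected connected graph on $[n]$ (for $i\ne j$, $w_{ij}>0$ iff $\{i,j\}$ is an edge); $\rho_w$ is the spectral norm of $W-\frac1n\mathbf 1\mathbf 1^\intercal$. The D-RR algorithm: given initial points $x_{i,0}\in\mathbb{R}^p$ and stepsizes $\alpha_t>0$, at each epoch $t=0,1,\dots$ each agent $i$ draws a permutation $(\pi^i_0,\dots,\pi^i_{m-1})$ of $[m]$ uniformly at random, independently across agents and epochs; sets $x^0_{i,t}=x_{i,t}$; for $\ell=0,\dots,m-1$ sets $x^{\ell+1}_{i,t}=\sum_{j=1}^n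 w_{ij}\big(x^\ell_{j,t}-\alpha_t\nabla f_{j,\pi^j_\ell}(x^\ell_{j,t})\big)$; sets $x_{i,t+1}=x^m_{i,t}$. Notation: $\mathbf{x}_t^\ell\in\mathbb{R}^{n\times p}$ has $i$-th row $(x^\ell_{i,t})^\intercal$; $\bar x_t^\ell=\frac1n\sum_i x^\ell_{i,t}$; $\mathbf 1(\bar x_t^\ell)^\intercal$ is the $n\times p$ matrix all of whose rows equal $(\bar x_t^\ell)^\intercal$; $\|\cdot\|$ is Euclidean/Frobenius norm. Nonconvex assumptions: each $f_{i,\ell}$ has $L$-Lipschitz gradient and satisfies $f_{i,\ell}\ge\bar f_{i,\ell}$ for some constant $\bar f_{i,\ell}\in\mathbb{R}$. *)

(* Defs.v *)
From HB Require Import structures.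
From mathcomp Require Import all_boot all_order all_algebra all_fingroup.
From mathcomp Require Import all_classical all_reals all_analysis.
Set Implicit Arguments. Unset Strict Implicit. Unset Printing Implicit Defensive.
Import Order.TTheory GRing.Theory Num.Theory.
Import numFieldNormedType.Exports.
Local Open Scope ring_scope.

Section DRR.
Variable R : realType.

Definition sqnorm (a b : nat) (A : 'M[R]_(a, b)) : R :=
  \sum_(i < a) \sum_(j < b) A i j ^+ 2.

Definition enorm (a b : nat) (A : 'M[R]_(a, b)) : R := Num.sqrt (sqnorm A).

Definition grad (p : nat) (h : 'rV[R]_p -> R) (x : 'rV[R]_p) : 'rV[R]_p :=
  \row_(k < p) derive h x (delta_mx 0 k : 'rV[R]_p).

Definition favg (n m p : nat) (F : 'I_n -> 'I_m -> 'rV[R]_p -> R)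
  (x : 'rV[R]_p) : R :=
  n%:R^-1 * \sum_(i < n) (m%:R^-1 * \sum_(l < m) F i l x).

Definition xbar (n p : nat) (X : 'M[R]_(n, p)) : 'rV[R]_p :=
  n%:R^-1 *: \sum_(i < n) row i X.

(* the n x p matrix 1 (bar x)^T, all rows equal to xbar X *)
Definition consmx (n p : nat) (X : 'M[R]_(n, p)) : 'M[R]_(n, p) :=
  \matrix_(i < n) xbar X.

(* W is nonnegative, symmetric, row-stochastic and compliant with a connected
   undirected graph on 'I_n: edges {i,j}, i != j, are exactly the w_ij > 0. *)
Definition mixing_matrix (n : nat) (W : 'M[R]_n) : Prop :=
  [/\ forall i j, 0 <= W i j,
      W^T = W,
      W *m const_mx 1 = const_mx 1 :> 'cV[R]_n &
      forall i j : 'I_n, connect (fun a b : 'I_n => (a != b) && (0 < W a b)) i j].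

Variables (n m p : nat) (F : 'I_n -> 'I_m -> 'rV[R]_p -> R) (W : 'M[R]_n)
  (alpha : R).

Definition drr_step (sig : 'I_n -> 'I_m) (X : 'M[R]_(n, p)) : 'M[R]_(n, p) :=
  W *m (X - alpha *: \matrix_(j < n) grad (F j (sig j)) (row j X)).

Fixpoint drr_inner (pit : 'I_n -> {perm 'I_m}) (X : 'M[R]_(n, p)) (l : nat)
  : 'M[R]_(n, p) :=
  match l with
  | 0 => X
  | l'.+1 =>
      let Y := drr_inner pit X l' in
      if (insub l' : option 'I_m) is Some o
      then drr_step (fun j => pit j o) Y else Y
  end.

Fixpoint drr_x (X0 : 'M[R]_(n, p)) (pi : nat -> 'I_n -> {perm 'I_m}) (t : nat)
  : 'M[R]_(n, p) :=
  match t with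
  | 0 => X0
  | t'.+1 => drr_inner (pi t') (drr_x X0 pi t') m
  end.

Definition drr_xl (X0 : 'M[R]_(n, p)) (pi : nat -> 'I_n -> {perm 'I_m})
  (t l : nat) : 'M[R]_(n, p) :=
  drr_inner (pi t) (drr_x X0 pi t) l.

End DRR.

(* Main.v *)
Require Import Defs.
From HB Require Import structures.
From mathcomp Require Import all_boot all_order all_algebra all_fingroup.
From mathcomp Require Import all_classical all_reals all_analysis.
From mathcomp Require Import ring lra.
Import Order.TTheory GRing.Theory Num.Theory.
Import numFieldNormedType.Exports.
Local Open Scope ring_scope.

Section S.
Context {R : realType}.

Definition dot {p : nat} (u v : 'rV[R]_p) : R := \sum_(k < p) u 0 k * v 0 k.

Lemma derive_dot p (h : 'rV[R]_p -> R) z v :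
  differentiable h z -> derive h z v = dot (grad h z) v.
Proof.
move=> dh; rewrite deriveE // {1}(row_sum_delta v) linear_sum.
apply: eq_bigr => k _; rewrite linearZ /= -deriveE // mxE mulrC.
by [].
Qed.

Lemma quot_eq p (h : 'rV[R]_p -> R) (x v : 'rV[R]_p) (s : R) :
  (fun t : R => t^-1 *: (((fun s : R => h (x + s *: v)) \o shift s) (t *: 1) - h (x + s *: v)))
  = (fun t : R => t^-1 *: ((h \o shift (x + s *: v)) (t *: v) - h (x + s *: v))).
Proof.
rewrite funeqE => t /=.
rewrite /shift /= scaler1 scalerDl [t *: v + _]addrC addrA.
by rewrite (addrC (t *: v)).
Qed.

Lemma phi_derivable p (h : 'rV[R]_p -> R) (x v : 'rV[R]_p) (s : R) :
  (forall y, differentiable h y) ->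
  derivable (fun s : R => h (x + s *: v)) s 1.
Proof.
move=> dh; rewrite /derivable quot_eq; exact: diff_derivable.
Qed.

Lemma phi_derive p (h : 'rV[R]_p -> R) (x v : 'rV[R]_p) (s : R) :
  derive (fun s : R => h (x + s *: v)) s 1 = derive h (x + s *: v) v.
Proof. by rewrite /derive quot_eq. Qed.


Lemma sqnorm_rV p (u : 'rV[R]_p) : sqnorm u = \sum_(k < p) u 0 k ^+ 2.
Proof. by rewrite /sqnorm big_ord1. Qed.

Lemma sqnorm_ge0 a b (A : 'M[R]_(a, b)) : 0 <= sqnorm A.
Proof. by apply: sumr_ge0 => i _; apply: sumr_ge0 => j _; exact: sqr_ge0. Qed.

Lemma dotBl p (a b v : 'rV[R]_p) : dot (a - b) v = dot a v - dot b v.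
Proof. by rewrite /dot -sumrB; apply: eq_bigr => k _; rewrite !mxE mulrBl. Qed.

Lemma sqnormZ p (s : R) (v : 'rV[R]_p) : sqnorm (s *: v) = s ^+ 2 * sqnorm v.
Proof. by rewrite !sqnorm_rV mulr_sumr; apply: eq_bigr => k _; rewrite mxE exprMn. Qed.

Lemma dot_le p (lam : R) (a b : 'rV[R]_p) :
  2 * lam * dot a b <= sqnorm a + lam ^+ 2 * sqnorm b.
Proof.
rewrite !sqnorm_rV /dot mulr_sumr mulr_sumr -subr_ge0 -big_split -sumrB /=.
apply: sumr_ge0 => k _.
have -> : a 0 k ^+ 2 + lam ^+ 2 * b 0 k ^+ 2 - 2 * lam * (a 0 k * b 0 k)
   = (a 0 k - lam * b 0 k) ^+ 2 by ring.
exact: sqr_ge0.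
Qed.

Lemma sq_sum_le k (c : 'I_k -> R) :
  (\sum_i c i) ^+ 2 <= k%:R * \sum_i c i ^+ 2.
Proof.
case: k c => [|k] c; first by rewrite big_ord0 expr0n mul0r.
set S := \sum_i c i; set Q := \sum_i c i ^+ 2.
have H : 0 <= \sum_(i < k.+1) (k.+1%:R * c i - S) ^+ 2.
  by apply: sumr_ge0 => i _; exact: sqr_ge0.
have E : \sum_(i < k.+1) (k.+1%:R * c i - S) ^+ 2
        = k.+1%:R * (k.+1%:R * Q - S ^+ 2).
  under eq_bigr => i _ do rewrite sqrrB exprMn.
  rewrite big_split /= sumrB -mulr_sumr -/Q sumr_const card_ord.
  rewrite sumrMnl -mulr_suml -mulr_sumr -/S.
  rewrite -[S ^+ 2 *+ k.+1]mulr_natr mulr2n; set K := k.+1%:R; ring.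
rewrite E in H.
have kp : 0 < k.+1%:R :> R by rewrite ltr0n.
rewrite pmulr_rge0 // subr_ge0 in H.
exact: H.
Qed.

Lemma sqnorm_sum p k (a : 'I_k -> 'rV[R]_p) :
  sqnorm (\sum_i a i) <= k%:R * \sum_i sqnorm (a i).
Proof.
rewrite sqnorm_rV.
under eq_bigr => j _ do rewrite summxE.
under [X in _ <= _ * X]eq_bigr => i _ do rewrite sqnorm_rV.
rewrite exchange_big mulr_sumr /=; apply: ler_sum => j _; exact: sq_sum_le.
Qed.

Lemma sqnormD2 p (a b : 'rV[R]_p) : sqnorm (a + b) <= 2 * sqnorm a + 2 * sqnorm b.
Proof.
rewrite !sqnorm_rV !mulr_sumr -big_split; apply: ler_sum => k _; rewrite mxE.
rewrite -subr_ge0.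
have -> : 2 * a 0 k ^+ 2 + 2 * b 0 k ^+ 2 - (a 0 k + b 0 k) ^+ 2 = (a 0 k - b 0 k) ^+ 2 by ring.
exact: sqr_ge0.
Qed.

Lemma sqnormN p (a : 'rV[R]_p) : sqnorm (- a) = sqnorm a.
Proof. by rewrite !sqnorm_rV; apply: eq_bigr => k _; rewrite mxE sqrrN. Qed.

Lemma dot_id p (g d : 'rV[R]_p) (c : R) :
  2 * c * dot g d = c ^+ 2 * sqnorm g + sqnorm d - sqnorm (d - c *: g).
Proof.
rewrite !sqnorm_rV /dot !mulr_sumr -big_split -sumrB /=.
by apply: eq_bigr => k _; rewrite !mxE; ring.
Qed.

Lemma dotDr p (a u v : 'rV[R]_p) : dot a (u + v) = dot a u + dot a v.
Proof. by rewrite /dot -big_split; apply: eq_bigr => k _; rewrite mxE mulrDr. Qed.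

Lemma dotZr p (a v : 'rV[R]_p) c : dot a (c *: v) = c * dot a v.
Proof. by rewrite /dot mulr_sumr; apply: eq_bigr => k _; rewrite mxE mulrCA. Qed.

Lemma dotZl p (a v : 'rV[R]_p) c : dot (c *: a) v = c * dot a v.
Proof. by rewrite /dot mulr_sumr; apply: eq_bigr => k _; rewrite mxE mulrA. Qed.

Lemma dot_suml p k (a : 'I_k -> 'rV[R]_p) v :
  dot (\sum_i a i) v = \sum_i dot (a i) v.
Proof.
rewrite /dot exchange_big /=; apply: eq_bigr => j _.
by rewrite summxE mulr_suml.
Qed.

End S.

Section T.
Variable R : realType.
Lemma descent p (h : 'rV[R]_p -> R) (L : R) (x v : 'rV[R]_p) :
  0 < L ->
  (forall y, differentiable h y) ->
  (forall y z, sqnorm (grad h y - grad h z) <= L ^+ 2 * sqnorm (y - z)) ->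
  h (x + v) <= h x + dot (grad h x) v + L / 2 * sqnorm v.
Proof.
move=> L0 dh Lip.
have L0' : 0 <= L by apply: ltW.
pose phi := fun s : R => h (x + s *: v).
pose c0 := dot (grad h x) v.
pose K := L * sqnorm v / 2.
have Dphi : forall s, is_derive s (1:R) phi (dot (grad h (x + s *: v)) v).
  move=> s; apply: DeriveDef; first exact: phi_derivable.
  by rewrite phi_derive derive_dot.
pose psi : R -> R := phi - c0 \*: (@id R) - K \*: ((@id R) * (@id R)).
have Dpsi : forall s, is_derive s (1:R) psi
   (dot (grad h (x + s *: v)) v - c0 *: 1 - K *: (s *: 1 + s *: 1)).
  move=> s. apply: is_deriveB.
have psi_le : psi 1 <= psi 0.
  apply: (@ler0_derive1_le_cc R psi 0 1).
  - by move=> s _; case: (Dpsi s).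
  - move=> s; rewrite in_itv /= => /andP[s0 s1].
    rewrite derive1E derive_val.
    have Ls : 0 < L * s by apply: mulr_gt0.
    have := dot_le _ (L * s) (grad h (x + s *: v) - grad h x) v.
    have := Lip (x + s *: v) x; rewrite addrAC subrr add0r sqnormZ dotBl => H1 H2.
    rewrite -/c0 /K.
    have H3 : 2 * (L * s) * (dot (grad h (x + s *: v)) v - c0) <= 2 * (L * s) * (L * s * sqnorm v).
      apply: le_trans H2 _. have := H1. nra.
    rewrite ler_pM2l ?mulr_gt0 // in H3.
    have E2 : (L * sqnorm v / 2) *: (s%:A + s%:A) = L * s * sqnorm v :> R.
      change ((L * sqnorm v / 2) * (s * 1 + s * 1) = L * s * sqnorm v).
      by field.
    rewrite E2 -[c0%:A]/(c0 * 1) mulr1; lra.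
  - apply: derivable_within_continuous => s _; by case: (Dpsi s).
  - by rewrite in_itv /= lexx ler01.
  - by rewrite in_itv /= lexx ler01.
  - exact: ler01.
have E : forall s, psi s = h (x + s *: v) - c0 * s - K * (s * s) by [].
move: psi_le; rewrite !E scale0r scale1r addr0 !mul0r mulr0 !subr0 !mulr1.
rewrite /K /c0 mulr0 subr0 mulrAC => H; lra.
Qed.
End T.
Section U.
Context {R : realType}.

Lemma xbarE n p (X : 'M[R]_(n, p)) k : xbar X 0 k = n%:R^-1 * \sum_i X i k.
Proof. by rewrite /xbar mxE summxE; congr (_ * _); apply: eq_bigr => i _; rewrite mxE. Qed.

Lemma xbar_mix n p (W : 'M[R]_n) (Y : 'M[R]_(n, p)) :
  mixing_matrix W -> xbar (W *m Y) = xbar Y.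
Proof.
case=> _ WT W1 _; apply/rowP => k; rewrite !xbarE; congr (_ * _).
under eq_bigr => i _ do rewrite mxE.
rewrite exchange_big /=; apply: eq_bigr => j _.
rewrite -mulr_suml.
have -> : \sum_i W i j = 1.
  have := congr1 (fun M : 'M[R]_(n, 1) => M j 0) W1; rewrite !mxE => <-.
  by apply: eq_bigr => i _; rewrite mxE mulr1 -{1}WT mxE.
by rewrite mul1r.
Qed.

Lemma xbarB n p (A B : 'M[R]_(n, p)) (c : R) :
  xbar (A - c *: B) = xbar A - c *: xbar B.
Proof.
apply/rowP => k; rewrite xbarE.
have -> : (xbar A - c *: xbar B) 0 k = xbar A 0 k - c * xbar B 0 k by rewrite !mxE.
rewrite !xbarE mulrCA -mulrBr; congr (_ * _).
by rewrite mulr_sumr -sumrB; apply: eq_bigr => i _; rewrite !mxE.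
Qed.

Lemma xbar_mat n p (g : 'I_n -> 'rV[R]_p) :
  xbar (\matrix_(j < n) g j) = n%:R^-1 *: \sum_j g j.
Proof. by rewrite /xbar; congr (_ *: _); apply: eq_bigr => j _; rewrite rowK. Qed.

Lemma sqnorm_cons n p (X : 'M[R]_(n, p)) :
  sqnorm (X - consmx X) = \sum_j sqnorm (row j X - xbar X).
Proof.
rewrite /sqnorm; apply: eq_bigr => j _; rewrite big_ord1.
by apply: eq_bigr => k _; rewrite !mxE.
Qed.

End U.

Section V.
Context {R : realType}.
Variables (n m p : nat) (F : 'I_n -> 'I_m -> 'rV[R]_p -> R) (W : 'M[R]_n) (alpha : R).
Hypothesis HW : mixing_matrix W.

Lemma drr_inner_S (pit : 'I_n -> {perm 'I_m}) X (o : 'I_m) :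
  drr_inner F W alpha pit X o.+1 =
  drr_step F W alpha (fun j => pit j o) (drr_inner F W alpha pit X o).
Proof.
rewrite /=; case: insubP => [u _ /val_inj -> | ] //; by rewrite ltn_ord.
Qed.

Lemma xbar_step sig Y :
  xbar (drr_step F W alpha sig Y) =
  xbar Y - alpha *: (n%:R^-1 *: \sum_j grad (F j (sig j)) (row j Y)).
Proof. by rewrite /drr_step xbar_mix // (xbarB _ _ Y _ alpha) xbar_mat. Qed.

Lemma xbar_tele (pit : 'I_n -> {perm 'I_m}) X k : (k <= m)%N ->
  xbar (drr_inner F W alpha pit X k) =
  xbar X - alpha *: \sum_(o < m | (o < k)%N)
     (n%:R^-1 *: \sum_j grad (F j (pit j o)) (row j (drr_inner F W alpha pit X o))).
Proof.
elim: k => [_|k IH Hk].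
  by rewrite big_pred0 // scaler0 subr0.
have := drr_inner_S pit X (Ordinal Hk); rewrite /= => ->.
rewrite xbar_step IH; last exact: ltnW.
rewrite [in RHS](bigD1 (Ordinal Hk)) //=.
rewrite [in RHS]scalerDr [in RHS]opprD [in RHS]addrA [in LHS]addrAC.
congr (_ - _ - _); congr (_ *: _); apply: eq_bigl => i.
by rewrite ltnS -(inj_eq val_inj) /= ltn_neqAle andbC.
Qed.

Lemma favg_fun :
  favg F = n%:R^-1 \*: \sum_(i < n) (m%:R^-1 \*: \sum_(l < m) F i l).
Proof.
apply/funext => y; rewrite /favg /=.
rewrite fct_sumE; congr (_ * _); apply: eq_bigr => i _ /=.
by rewrite fct_sumE.
Qed.

Lemma derive_favg (HF : forall i l x, differentiable (F i l) x) x v :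
  derive (favg F) x v =
  n%:R^-1 * \sum_i (m%:R^-1 * \sum_l derive (F i l) x v).
Proof.
have D : forall i l, is_derive x v (F i l) (derive (F i l) x v).
  by move=> i l; apply: derivableP; apply: diff_derivable.
have D2 : forall i, is_derive x v (m%:R^-1 \*: \sum_(l < m) F i l)
                      (m%:R^-1 *: \sum_l derive (F i l) x v).
  by move=> i; apply: is_deriveZ; apply: is_derive_sum.
have D3 : is_derive x v (n%:R^-1 \*: \sum_(i < n) (m%:R^-1 \*: \sum_(l < m) F i l))
                        (n%:R^-1 *: \sum_i (m%:R^-1 *: \sum_l derive (F i l) x v)).
  by apply: is_deriveZ; apply: is_derive_sum.
by rewrite favg_fun derive_val.
Qed.

Lemma grad_favg (HF : forall i l x, differentiable (F i l) x) x :
  grad (favg F) x = n%:R^-1 *: \sum_i (m%:R^-1 *: \sum_l grad (F i l) x).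
Proof.
apply/rowP => k; rewrite [LHS]mxE derive_favg // mxE summxE; congr (_ * _).
apply: eq_bigr => i _; rewrite mxE summxE; congr (_ * _).
by apply: eq_bigr => l _; rewrite mxE.
Qed.

Definition avg2 (a : 'I_n -> 'I_m -> R) := n%:R^-1 * \sum_i (m%:R^-1 * \sum_l a i l).

Lemma avg2_le (a b : 'I_n -> 'I_m -> R) : (forall i l, a i l <= b i l) -> avg2 a <= avg2 b.
Proof.
move=> H; rewrite /avg2; apply: ler_wpM2l; first by rewrite invr_ge0 ler0n.
apply: ler_sum => i _; apply: ler_wpM2l; first by rewrite invr_ge0 ler0n.
by apply: ler_sum => l _; exact: H.
Qed.

Lemma avg2D (a b : 'I_n -> 'I_m -> R) :
  avg2 (fun i l => a i l + b i l) = avg2 a + avg2 b.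
Proof.
rewrite /avg2 -mulrDr -big_split /=; congr (_ * _); apply: eq_bigr => i _.
by rewrite big_split mulrDr.
Qed.

Lemma avg2_const (c : R) : (0 < n)%N -> (0 < m)%N -> avg2 (fun _ _ => c) = c.
Proof.
move=> Hn Hm; rewrite /avg2.
have mn : m%:R != 0 :> R by rewrite pnatr_eq0 -lt0n.
have nn : n%:R != 0 :> R by rewrite pnatr_eq0 -lt0n.
under eq_bigr => i _ do rewrite sumr_const card_ord -[c *+ m]mulr_natl mulrA mulVf // mul1r.
by rewrite sumr_const card_ord -[c *+ n]mulr_natl mulrA mulVf // mul1r.
Qed.

Lemma avg2_split (a b : 'I_n -> 'I_m -> R) (c : R) : (0 < n)%N -> (0 < m)%N ->
  avg2 (fun i l => a i l + b i l + c) = avg2 a + avg2 b + c.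
Proof. by move=> Hn Hm; rewrite avg2D avg2D avg2_const. Qed.

Lemma avg_bound (q : nat) (a : 'I_n -> 'rV[R]_q) : (0 < n)%N ->
  sqnorm (n%:R^-1 *: \sum_j a j) <= n%:R^-1 * \sum_j sqnorm (a j).
Proof.
move=> Hn; rewrite sqnormZ.
have nn : 0 < n%:R :> R by rewrite ltr0n.
apply: le_trans (ler_wpM2l _ (sqnorm_sum _ _ a)) _; first exact: sqr_ge0.
by rewrite mulrA expr2 -(mulrA _ _ n%:R) mulVf ?mulr1 ?gt_eqF.
Qed.

End V.

Lemma final_arith (R : realType) (fy fx a D Sg Sd Se T mm L : R) :
  0 < mm -> 0 < a -> 0 <= Sd -> a * mm * L <= 1 -> 0 < L ->
  fy <= fx + - a * D + L / 2 * ((- a) ^+ 2 * Sd) ->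
  2 * mm * D = mm ^+ 2 * Sg + Sd - Se -> Se <= mm * T ->
  fy <= fx - a * mm / 2 * Sg + a / 2 * T.
Proof.
move=> mm0 a0 Sd0 amL L0 H1 H2 H3.
have mmn : mm != 0 by rewrite gt_eqF.
have HD : a * D = a * mm / 2 * Sg + a / (2 * mm) * Sd - a / (2 * mm) * Se.
  have -> : D = (mm ^+ 2 * Sg + Sd - Se) / (2 * mm).
    by rewrite -H2; field.
  by field.
have h1 : a / (2 * mm) * Se <= a / 2 * T.
  have -> : a / 2 * T = a / (2 * mm) * (mm * T) by field.
  apply: ler_wpM2l => //; apply: divr_ge0; [exact: ltW | apply: mulr_ge0 => //; exact: ltW].
have h2 : L / 2 * ((- a) ^+ 2 * Sd) <= a / (2 * mm) * Sd.
  have -> : L / 2 * ((- a) ^+ 2 * Sd) = a / (2 * mm) * Sd * (a * mm * L).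
    by rewrite sqrrN; field.
  rewrite -[X in _ <= X]mulr1; apply: ler_wpM2l => //.
  apply: mulr_ge0 => //; apply: divr_ge0; [exact: ltW | apply: mulr_ge0 => //; exact: ltW].
rewrite mulNr HD in H1. lra.
Qed.

Theorem lemma13 (R : realType) (n m p : nat)
  (F : 'I_n -> 'I_m -> 'rV[R]_p -> R) (W : 'M[R]_n) (L alpha : R)
  (X0 : 'M[R]_(n, p)) (pi : nat -> 'I_n -> {perm 'I_m}) :
  (0 < n)%N -> (0 < m)%N -> (0 < p)%N ->
  mixing_matrix W ->
  (forall i l x, differentiable (F i l) x) ->
  (forall i l x y,
      enorm (grad (F i l) x - grad (F i l) y) <= L * enorm (x - y)) ->
  (forall i l, exists fb : R, forall x, fb <= F i l x) ->
  0 < alpha -> alpha <= (m%:R * L)^-1 ->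
  forall t : nat,
    let Xl := drr_xl F W alpha X0 pi t in
    favg F (xbar (drr_x F W alpha X0 pi t.+1))
    <= favg F (xbar (Xl 0%N))
       - alpha * m%:R / 2 * sqnorm (grad (favg F) (xbar (Xl 0%N)))
       + L ^+ 2 * alpha / n%:R *
           \sum_(l < m) sqnorm (Xl l - consmx (Xl l))
       + alpha * L ^+ 2 *
           \sum_(l < m) sqnorm (xbar (Xl l) - xbar (Xl 0%N)).
Proof.
move=> Hn Hm Hp HW HF Lip _ Ha Hal t; cbv zeta.
have m0 : 0 < m%:R :> R by rewrite ltr0n.
have n0 : 0 < n%:R :> R by rewrite ltr0n.
have Lpos : 0 < L.
  case: (ltP 0 L) => // HL; exfalso.
  have : (m%:R * L)^-1 <= 0 by rewrite invr_le0; apply: mulr_ge0_le0 => //; exact: ltW.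
  by move=> H; have := le_lt_trans (le_trans Hal H) Ha; rewrite ltxx.
have amL : alpha * m%:R * L <= 1.
  have mL : 0 < m%:R * L by apply: mulr_gt0.
  have := ler_wpM2r (ltW mL) Hal; rewrite mulVf ?gt_eqF // mulrA //.
have LipS : forall i l y z,
    sqnorm (grad (F i l) y - grad (F i l) z) <= L ^+ 2 * sqnorm (y - z).
  move=> i l y z; have := Lip i l y z; rewrite /enorm => H.
  have h1 := sqrtr_ge0 (sqnorm (grad (F i l) y - grad (F i l) z)).
  rewrite -(sqr_sqrtr (sqnorm_ge0 _ _ (grad (F i l) y - grad (F i l) z))).
  rewrite -(sqr_sqrtr (sqnorm_ge0 _ _ (y - z))). nra.
rewrite /drr_xl /=.
set X := drr_x F W alpha X0 pi t.
set x0 := xbar X.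
set Y := fun o : nat => drr_inner F W alpha (pi t) X o.
pose G := fun o : 'I_m => n%:R^-1 *: \sum_j grad (F j (pi t j o)) (row j (Y o)).
pose Hh := fun o : 'I_m => n%:R^-1 *: \sum_j grad (F j (pi t j o)) x0.
pose gf := grad (favg F) x0.
pose d := \sum_o G o.
have Hy : xbar (Y m) = x0 + (- alpha) *: d.
  rewrite /Y (xbar_tele _ _ _ _ _ _ HW) // scaleNr; congr (_ - _ *: _).
  by apply: eq_bigl => o; rewrite ltn_ord.
rewrite Hy.
have Hdesc : favg F (x0 + (- alpha) *: d) <=
    favg F x0 + dot gf ((- alpha) *: d) + L / 2 * sqnorm ((- alpha) *: d).
  have := avg2_le n m (fun i l => F i l (x0 + (- alpha) *: d))
     (fun i l => F i l x0 + dot (grad (F i l) x0) ((- alpha) *: d) +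
                  L / 2 * sqnorm ((- alpha) *: d))
     (fun i l => descent R p (F i l) L x0 _ Lpos (HF i l) (LipS i l)).
  rewrite avg2_split // => H; apply: le_trans H _.
  rewrite /gf (grad_favg _ _ _ _ HF) dotZl dot_suml.
  apply: lerD => //; apply: lerD => //; rewrite /avg2.
  rewrite le_eqVlt; apply/orP; left; apply/eqP.
  congr (_ * _); apply: eq_bigr => i _.
  by rewrite dotZl dot_suml.
rewrite dotZr sqnormZ in Hdesc.
have Hid := dot_id p gf d m%:R.
have Hsum : \sum_o Hh o = m%:R *: gf.
  rewrite /Hh -scaler_sumr exchange_big /= /gf (grad_favg _ _ _ _ HF) scalerA mulrC -scalerA.
  congr (_ *: _); rewrite scaler_sumr; apply: eq_bigr => j _.
  rewrite scalerA mulfV ?gt_eqF // scale1r.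
  by apply: esym; apply: (reindex_inj (@perm_inj _ (pi t j))).
have He : d - m%:R *: gf = \sum_o (G o - Hh o) by rewrite -Hsum sumrB.
have Hbo : forall o : 'I_m, sqnorm (G o - Hh o) <=
    2 * L ^+ 2 / n%:R * sqnorm (Y o - consmx (Y o)) + 2 * L ^+ 2 * sqnorm (xbar (Y o) - x0).
  move=> o; rewrite /G /Hh -scalerBr -sumrB.
  apply: le_trans (avg_bound _ _ _ Hn) _.
  apply: (@le_trans _ _ (n%:R^-1 * \sum_j (2 * L ^+ 2 * sqnorm (row j (Y o) - xbar (Y o))
                                + 2 * L ^+ 2 * sqnorm (xbar (Y o) - x0)))).
    apply: ler_wpM2l; first by rewrite invr_ge0 ltW.
    apply: ler_sum => j _.
    apply: le_trans (LipS _ _ _ _) _.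
    have := sqnormD2 _ (row j (Y o) - xbar (Y o)) (xbar (Y o) - x0).
    rewrite addrA subrK => H.
    have L2 := sqr_ge0 L. nra.
  rewrite big_split /= -!mulr_sumr sumr_const card_ord sqnorm_cons.
  rewrite -[sqnorm (xbar (Y o) - x0) *+ n]mulr_natl.
  rewrite le_eqVlt; apply/orP; left; apply/eqP; field; by rewrite pnatr_eq0 -lt0n.
pose T := \sum_(o < m) (2 * L ^+ 2 / n%:R * sqnorm (Y o - consmx (Y o))
                        + 2 * L ^+ 2 * sqnorm (xbar (Y o) - x0)).
have HSe : sqnorm (d - m%:R *: gf) <= m%:R * T.
  rewrite He; apply: le_trans (sqnorm_sum _ _ _) _.
  apply: ler_wpM2l; [exact: ltW | apply: ler_sum => o _; exact: Hbo].
have := final_arith _ _ _ _ _ _ _ _ _ _ _ m0 Ha (sqnorm_ge0 _ _ d) amL Lpos Hdesc Hid HSe.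
have ET : alpha / 2 * T =
   L ^+ 2 * alpha / n%:R * \sum_(l < m) sqnorm (drr_inner F W alpha (pi t) X l -
        consmx (drr_inner F W alpha (pi t) X l))
   + alpha * L ^+ 2 * \sum_(l < m) sqnorm (xbar (drr_inner F W alpha (pi t) X l) - x0).
  rewrite /T big_split /= -!mulr_sumr /Y.
  field; by rewrite pnatr_eq0 -lt0n.
move=> H; apply: le_trans H _.
by rewrite ET addrA lexx.
Qed.
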